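(* Let $\vec I^{\mathcal M}$ be the multipointed $d$-space with underlying space $[0,1]$, set of states $\{0,1\}$, execution paths from $0$ to $1$ exactly the nondecreasing surjective continuous maps $[0,1]\to[0,1]$ (the set $\mathcal M(1,1)$), and no other execution paths. Then the space \[ \mathbb P_{0,1}\vec I^{\mathcal M}=\mathrm{coeq}\big(\mathbb P^{top}_{0,1}\vec I^{\mathcal M}\times\mathcal G(1,1)\rightrightarrows\mathbb P^{top}_{0,1}\vec I^{\mathcal M}\big), \] where the two maps are $(c,\phi)\mapsto c$ and $(c,\phi)\mapsto c\circ\phi$, is not a singleton.
   Context: $\mathbf{Top}$: $\Delta$-generated spaces; $\mathbb P^{top}_{0,1}\vec I^{\mathcal M}\subset\mathbf{TOP}([0,1],[0,1])$ carries the $\Delta$-kelleyfication of the relative compact-open topology, and the coequalizer is taken in $\mathbf{Top}$. $\mathcal G(1,1)$ is the space of nondecreasing homeomorphisms of $[0,1]$. A multipointed $d$-space is a triple $(|X|,X^0,\mathbb P^{top}X)$ of a space, a set of states, and a set of continuous paths $[0,1]\to|X|$ between states, closed under precomposition with elements of $\mathcal G(1,1)$ and under normalized composition. *)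

(* Defs.v *)
From HB Require Import structures.
From mathcomp Require Import all_boot all_order all_algebra.
From mathcomp Require Import all_classical all_reals all_analysis.
From Stdlib Require Import Relations.
Set Implicit Arguments. Unset Strict Implicit. Unset Printing Implicit Defensive.
Import Order.TTheory GRing.Theory Num.Theory.
Import numFieldNormedType.Exports.
Local Open Scope classical_set_scope.
Local Open Scope ring_scope.

(* The unit interval [0,1] as a subset of R. Paths [0,1] -> [0,1] are
   represented by functions R -> R; only their values on [0,1] matter. *)
Definition unitI (K : realType) : set K := `[0, 1]%classic.
Arguments unitI K : clear implicits.

(* M(1,1): nondecreasing surjective continuous maps [0,1] -> [0,1]
   (= the execution paths of I^M from 0 to 1). *)
Definition inM (K : realType) (f : K -> K) : Prop :=
  {within unitI K, continuous f} /\
  (forall x y, unitI K x -> unitI K y -> x <= y -> f x <= f y) /\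
  f @` unitI K = unitI K.
Arguments inM : clear implicits.

Definition inG (K : realType) (phi : K -> K) : Prop :=
  inM K phi /\
  exists psi : K -> K,
    {within unitI K, continuous psi} /\
    (forall t, unitI K t -> unitI K (psi t)) /\
    (forall t, unitI K t -> psi (phi t) = t) /\
    (forall t, unitI K t -> phi (psi t) = t).
Arguments inG : clear implicits.

Definition reparam_step (K : realType) (c d : K -> K) : Prop :=
  inM K c /\ inM K d /\
  exists phi, inG K phi /\ (forall t, unitI K t -> d t = c (phi t)).

(* Underlying set of the coequalizer: P^top_{0,1} I^M modulo the equivalence
   relation generated by c ~ c o phi. *)
Definition coeq_rel (K : realType) : relation (K -> K) :=
  clos_refl_sym_trans (K -> K) (@reparam_step K).
Arguments coeq_rel : clear implicits.

(* Main.v *)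
Require Import Defs.
From HB Require Import structures.
From mathcomp Require Import all_boot all_order all_algebra.
From mathcomp Require Import all_classical all_reals all_analysis.
From Stdlib Require Import Relations.
From mathcomp Require Import lra ring.
Import Order.TTheory GRing.Theory Num.Theory.
Import numFieldNormedType.Exports.
Local Open Scope classical_set_scope.
Local Open Scope ring_scope.

Definition injI (R : realType) (c : R -> R) : Prop :=
  forall x y, unitI R x -> unitI R y -> c x = c y -> x = y.

Lemma step_inj (R : realType) (c d : R -> R) :
  @reparam_step R c d -> (@injI R c <-> @injI R d).
Proof.
move=> [_ [_ [phi [[[_ [_ im]] [psi [_ [psiI [psiphi phipsi]]]]] dE]]]].
have phiI : forall t, unitI R t -> unitI R (phi t).
  by move=> t It; rewrite -im; exists t.
split=> Hi x y Ix Iy.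
- rewrite !dE // => e.
  have e' : phi x = phi y by apply: Hi => //; apply: phiI.
  by rewrite -(psiphi x Ix) -(psiphi y Iy) e'.
- move=> e; rewrite -(phipsi x Ix) -(phipsi y Iy); congr phi.
  apply: Hi; try exact: psiI.
  by rewrite (dE _ (psiI _ Ix)) (dE _ (psiI _ Iy)) !phipsi.
Qed.

Lemma rel_inj (R : realType) (c d : R -> R) :
  coeq_rel R c d -> (@injI R c <-> @injI R d).
Proof.
elim=> [x y /step_inj //|x|x y _ [H1 H2]|x y z _ [H1 H2] _ [H3 H4]]; tauto.
Qed.

Theorem proposition3p7 (R : realType) :
  exists c d : R -> R, inM R c /\ inM R d /\ ~ coeq_rel R c d.
Proof.
exists id, ((fun _ => 0) \max (fun t => 2 * t - 1)).
split; [|split].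
- split; first by apply: continuous_subspaceT => x.
  split; first by [].
  by rewrite image_id.
- split.
    apply: continuous_subspaceT => x; apply: continuous_max.
      exact: cvg_cst.
    apply: cvgB; last exact: cvg_cst.
    apply: cvgM; first exact: cvg_cst.
    exact: cvg_id.
  split.
    move=> x y _ _ xy /=.
    rewrite /Order.max_fun.
    apply: le_max2; first exact: lexx.
    lra.
  apply/seteqP; split=> y.
    move=> [x]; rewrite /unitI /= !in_itv /= => /andP[x0 x1] <-.
    rewrite le_max lexx /= ge_max ler01 /=; lra.
  rewrite /unitI /= !in_itv /= => /andP[y0 y1].
  exists ((y + 1) / 2); first by rewrite /unitI /= in_itv /=; apply/andP; split; lra.
  rewrite /= (_ : 2 * ((y + 1) / 2) - 1 = y); last by field.
  by apply/max_idPr.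
- move=> /rel_inj [H _].
  have I0 : unitI R 0 by rewrite /unitI /= in_itv /= lexx ler01.
  have Ih : unitI R (1/2) by rewrite /unitI /= in_itv /=; apply/andP; split; lra.
  have Hd := H (fun x y _ _ e => e).
  have E : ((fun _ => 0) \max (fun t : R => 2 * t - 1)) 0 =
           ((fun _ => 0) \max (fun t : R => 2 * t - 1)) (1/2).
    rewrite /Order.max_fun /=.
    have -> : 2 * 0 - 1 = - 1 :> R by rewrite mulr0 add0r.
    have -> : 2 * (1/2) - 1 = 0 :> R by rewrite mul1r divff ?subrr // pnatr_eq0.
    by rewrite maxxx; apply/max_idPl; rewrite lerN10.
  have h : (0:R) = 1/2 := Hd 0 (1/2) I0 Ih E.
  have h2 : (1/2:R) != 0 by rewrite mul1r invr_eq0 pnatr_eq0.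
  by move: h2; rewrite -h eqxx.
Qed.
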